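(* Let $S$ be a numerical semigroup with minimal generators $g_1<\dots<g_\nu$ whose Apéry set is $\gamma$-rectangular. Then there exist non-negative integers $\lambda_{i,j}$ ($2\le i\le\nu$, $1\le j\le\nu$) with $$(\gamma_i+1)g_i=\lambda_{i,1}g_1+\lambda_{i,2}g_2+\dots+\lambda_{i,\nu}g_\nu\quad (i=2,\dots,\nu),$$ and a permutation $\sigma$ of $\{1,\dots,\nu\}$ with $\sigma(1)=1$ such that $\lambda_{\sigma(i),\sigma(j)}=0$ whenever $2\le i\le j\le\nu$.
   Context: A numerical semigroup is a submonoid $S$ of $(\mathbb N,+)$ with finite complement in $\mathbb N$; $g_1<\dots<g_\nu$ is its minimal system of generators and $m=g_1$ its multiplicity. $\mathrm{Ap}(S)=\{s\in S: s-m\notin S\}$. A representation of $s\in S$ is an expression $s=\sum_{i=1}^\nu\lambda_ig_i$, $\lambda_i\in\mathbb N$; $\mathrm{ord}(s)$ is the maximum of $\sum\lambda_i$ over all representations, and a representation is maximal if $\sum\lambda_i=\mathrm{ord}(s)$. For $i=2,\dots,\nu$, $\gamma_i=\max\{h\in\mathbb N: hg_i\in\mathrm{Ap}(S),\ \mathrm{ord}(hg_i)=h,\ \text{and } hg_i \text{ has a unique maximal representation}\}$. $\mathrm{Ap}(S)$ is $\gamma$-rectangular if $\mathrm{Ap}(S)=\{\sum_{i=2}^\nu\lambda_ig_i: 0\le\lambda_i\le\gamma_i\}$. *)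

(* Defs.v *)
From mathcomp Require Import all_boot all_fingroup.
Set Implicit Arguments. Unset Strict Implicit. Unset Printing Implicit Defensive.

(* Generators are indexed by 'I_nu (index k here = index k+1 in the paper). *)
Section NS.
Variable nu : nat.

Definition numerical_semigroup (S : pred nat) : Prop :=
  S 0 /\ (forall a b, S a -> S b -> S (a + b)) /\
  exists N, forall n, N <= n -> S n.

Definition is_rep (g : 'I_nu -> nat) (lam : 'I_nu -> nat) (s : nat) : Prop :=
  \sum_(i < nu) lam i * g i = s.

Definition size_rep (lam : 'I_nu -> nat) : nat := \sum_(i < nu) lam i.

Definition minimal_generators (S : pred nat) (g : 'I_nu -> nat) : Prop :=
  (forall i j : 'I_nu, i < j -> g i < g j) /\
  (forall s, S s <-> exists lam, is_rep g lam s) /\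
  (forall i : 'I_nu, ~ exists lam, lam i = 0 /\ is_rep g lam (g i)).

Definition is_ord (g : 'I_nu -> nat) (s h : nat) : Prop :=
  (exists lam, is_rep g lam s /\ size_rep lam = h) /\
  (forall lam, is_rep g lam s -> size_rep lam <= h).

Definition unique_max_rep (g : 'I_nu -> nat) (s h : nat) : Prop :=
  forall lam mu, is_rep g lam s -> is_rep g mu s ->
    size_rep lam = h -> size_rep mu = h -> forall i, lam i = mu i.

Definition apery (S : pred nat) (m s : nat) : Prop :=
  S s /\ ~ (m <= s /\ S (s - m)).

Definition gamma_set (S : pred nat) (m : nat) (g : 'I_nu -> nat) (i : 'I_nu)
    (h : nat) : Prop :=
  apery S m (h * g i) /\ is_ord g (h * g i) h /\ unique_max_rep g (h * g i) h.

Definition is_gamma (S : pred nat) (m : nat) (g : 'I_nu -> nat) (i : 'I_nu)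
    (c : nat) : Prop :=
  gamma_set S m g i c /\ (forall h, gamma_set S m g i h -> h <= c).

End NS.

Definition gamma_rectangular n (S : pred nat) (g : 'I_n.+1 -> nat)
    (gam : 'I_n.+1 -> nat) : Prop :=
  forall s, apery S (g ord0) s <->
    exists lam : 'I_n.+1 -> nat,
      lam ord0 = 0 /\ (forall i, i != ord0 -> lam i <= gam i) /\ is_rep g lam s.

(* Main.v *)
Require Import Defs.
From mathcomp Require Import all_boot all_fingroup.
From Stdlib Require Import Classical.
From mathcomp Require Import zify.
From mathcomp Require Import all_algebra all_field.
Import GRing.Theory Num.Theory.
Set Implicit Arguments. Unset Strict Implicit. Unset Printing Implicit Defensive.

Section Main.
Variables (n : nat) (S : pred nat) (g : 'I_n.+1 -> nat) (gam : 'I_n.+1 -> nat).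
Hypothesis HS : numerical_semigroup S.
Hypothesis Hg : minimal_generators S g.
Hypothesis Hgam : forall i : 'I_n.+1, i != ord0 -> is_gamma S (g ord0) g i (gam i).
Hypothesis Hrect : gamma_rectangular S g gam.

Implicit Types f h lam : 'I_n.+1 -> nat.
Definition phi (f : 'I_n.+1 -> nat) := \sum_(i < n.+1) f i * g i.
Local Notation m := (g ord0).
Local Notation ap := (apery S (g ord0)).

Lemma phiS f : S (phi f).
Proof. by case: Hg => _ [H _]; apply/H; exists f. Qed.

Lemma SD a b : S a -> S b -> S (a + b).
Proof. by case: HS => _ [H _]; apply: H. Qed.

Lemma phiD f h : phi (fun i => f i + h i) = phi f + phi h.
Proof. by rewrite /phi -big_split; apply: eq_bigr => i _; rewrite mulnDl. Qed.

Lemma phi_ext f h : (forall i, f i = h i) -> phi f = phi h.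
Proof. by move=> E; apply: eq_bigr => i _; rewrite E. Qed.

Lemma phi_split f h : (forall i, h i <= f i) -> phi f = phi (fun i => f i - h i) + phi h.
Proof. by move=> le; rewrite -phiD; apply: phi_ext => i; rewrite subnK. Qed.

Lemma size_split f h : (forall i, h i <= f i) ->
  size_rep f = size_rep (fun i => f i - h i) + size_rep h.
Proof.
move=> le; rewrite /size_rep -big_split; apply: eq_bigr => i _ /=; by rewrite subnK.
Qed.

Lemma ap_sub f h : (forall i, h i <= f i) -> ap (phi f) -> ap (phi h).
Proof.
move=> le [Sf Hf]; split; first exact: phiS.
move=> [Hm Sm]; apply: Hf; rewrite (phi_split le); split; first exact: leq_trans (leq_addl _ _).
by rewrite -addnBA //; apply: SD => //; apply: phiS.
Qed.

Definition ev (k : 'I_n.+1) c := fun i : 'I_n.+1 => if i == k then c else 0.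

Lemma phi_ev k c : phi (ev k c) = c * g k.
Proof.
rewrite /phi (bigD1 k) //= big1 ?addn0 /ev ?eqxx // => i /negPf ->; by [].
Qed.

Lemma size_ev k c : size_rep (ev k c) = c.
Proof.
rewrite /size_rep (bigD1 k) //= big1 ?addn0 /ev ?eqxx // => i /negPf ->; by [].
Qed.

Lemma m_pos : 0 < m.
Proof.
case: Hg => _ [_ H]; rewrite lt0n; apply/negP => /eqP m0; apply: (H ord0).
exists (fun _ => 0); split => //; rewrite /is_rep m0 big1 //.
Qed.

Lemma ap_rep0 s lam : ap s -> is_rep g lam s -> lam ord0 = 0.
Proof.
move=> [_ Hs] rep; apply/eqP; apply/negP => /negP; rewrite -lt0n => pos.
apply: Hs; have le : forall i, ev ord0 1 i <= lam i by move=> i; rewrite /ev; case: eqP => // ->.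
have := phi_split le; rewrite phi_ev mul1n -/(phi lam) => E.
rewrite /is_rep -/(phi lam) in rep; rewrite -rep E addnK; split; first by rewrite leq_addl.
exact: phiS.
Qed.

Definition box (f : 'I_n.+1 -> nat) := f ord0 = 0 /\ forall i, i != ord0 -> f i <= gam i.

Lemma box_ap f : box f -> ap (phi f).
Proof. by move=> [H0 H]; apply/Hrect; exists f. Qed.


Lemma phiE lam : \sum_(i < n.+1) lam i * g i = phi lam.
Proof. by []. Qed.

Lemma size_ext f h : (forall i, f i = h i) -> size_rep f = size_rep h.
Proof. by move=> E; apply: eq_bigr => i _; rewrite E. Qed.

Lemma S_mul c : S (c * m).
Proof. rewrite -phi_ev; exact: phiS. Qed.

Lemma ap_modeq x y : ap y -> S x -> x <= y -> m %| (y - x) -> x = y.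
Proof.
move=> [Sy Hy] Sx le dv; case: (eqVneq x y) => // ne; exfalso.
have lt' : x < y by rewrite ltn_neqAle ne le.
have := divnK dv; set k := (y - x) %/ m => Ek.
have k1 : 0 < k by case: k Ek => [|k'] //= Ek; lia.
apply: Hy; split.
  by apply: leq_trans (leq_subr x y); rewrite -Ek leq_pmull.
have -> : y - m = x + (k.-1 * m).
  by case: k Ek k1 => // k' Ek _ /=; move: Ek; rewrite mulSn; lia.
by apply: SD => //; apply: S_mul.
Qed.

Lemma ap_uniq x y : ap x -> ap y -> x %% m = y %% m -> x = y.
Proof.
move=> ax ay E; case: (leqP x y) => le.
  apply: ap_modeq => //; first by case: ax.
  by rewrite -eqn_mod_dvd // E.
apply/esym; apply: ap_modeq => //; first by case: ay.
  exact: ltnW.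
by rewrite -eqn_mod_dvd ?E // ltnW.
Qed.

Lemma ap_min x s : ap x -> S s -> s %% m = x %% m -> x <= s /\ m %| (s - x).
Proof.
move=> ax Ss E; case: (leqP x s) => le.
  by split => //; rewrite -eqn_mod_dvd // E.
exfalso; have dv : m %| x - s by rewrite -eqn_mod_dvd ?E // ltnW.
have Exs := ap_modeq ax Ss (ltnW le) dv.
by rewrite Exs ltnn in le.
Qed.

Lemma ap_exists r : r < m -> exists x, ap x /\ x %% m = r.
Proof.
move=> rm; case: HS => _ [_ [N HN]].
pose P x := S x && (x %% m == r).
have exP : exists x, P x.
  exists (r + m * N); apply/andP; split; first by apply: HN; have := m_pos; nia.
  by rewrite mulnC addnC modnMDl modn_small.
case: (ex_minnP exP) => x /andP[Sx /eqP xr] xmin.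
exists x; split => //; split => // [[mx Sxm]].
have : P (x - m) by rewrite /P Sxm /= -xr -{2}(subnK mx) modnDr.
move/xmin; have := m_pos; lia.
Qed.

Definition yv (k : 'I_n.+1) := fun j : 'I_n.+1 =>
  if (0 < j) && (j < k) then gam j else if j == k then (gam k).+1 else 0.
Definition pre (k : 'I_n.+1) := fun j : 'I_n.+1 => if (0 < j) && (j < k) then gam j else 0.

Lemma bad_rep (k : 'I_n.+1) : k != ord0 -> ap ((gam k).+1 * g k) ->
  exists nu, is_rep g nu ((gam k).+1 * g k) /\ (gam k).+1 <= size_rep nu /\ nu k = 0.
Proof.
move=> k0 apk; have [[apg [[[lam0 [r0 s0]] ordg] ung]] Hmax] := Hgam k0.
apply: NNPP => Hno.
have key : forall lam, is_rep g lam ((gam k).+1 * g k) -> (gam k).+1 <= size_rep lam ->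
    forall i, lam i = ev k (gam k).+1 i.
  move=> lam rep sz; case: (posnP (lam k)) => lk.
    by exfalso; apply: Hno; exists lam.
  have le : forall i, ev k 1 i <= lam i by move=> i; rewrite /ev; case: eqP => // ->.
  have E1 := phi_split le; have E2 := size_split le.
  rewrite phi_ev mul1n in E1; rewrite size_ev in E2.
  set lam' := (fun i => lam i - ev k 1 i) in E1 E2.
  have rep' : is_rep g lam' (gam k * g k).
    rewrite /is_rep phiE; move: rep; rewrite /is_rep phiE E1 mulSn; lia.
  have sz' : size_rep lam' = gam k by have := ordg _ rep'; lia.
  have rev : is_rep g (ev k (gam k)) (gam k * g k) by rewrite /is_rep phiE phi_ev.
  have := ung _ _ rep' rev sz' (size_ev _ _) => Eq i.
  have := Eq i; rewrite /lam' /ev; case: eqP => [->|_]; lia.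
have gs : gamma_set S m g k (gam k).+1.
  split => //; split.
    split.
      by exists (ev k (gam k).+1); rewrite /is_rep phiE phi_ev size_ev.
    move=> lam rep; rewrite leqNgt; apply/negP => lt.
    have := size_ext (key lam rep (ltnW lt)); rewrite size_ev => E; lia.
  move=> lam mu rl rm sl sm i.
  by rewrite (key lam rl) ?sl // (key mu rm) ?sm.
by have := Hmax _ gs; rewrite ltnn.
Qed.

Lemma top_nap_aux (k : 'I_n.+1) : (forall k' : 'I_n.+1, k' < k -> k' != ord0 -> ~ ap (phi (yv k'))) ->
  k != ord0 -> ~ ap (phi (yv k)).
Proof.
move=> IH k0 apk.
have apg : ap ((gam k).+1 * g k).
  rewrite -phi_ev; apply: (ap_sub _ apk) => i; rewrite /ev /yv.
  case: eqP => [->|]; last by [].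
  by rewrite ltnn andbF ?eqxx.
have [nu [rep [sz nuk]]] := bad_rep k0 apg.
have nu0 : nu ord0 = 0 := ap_rep0 apg rep.
have E : phi (yv k) = phi (fun j => pre k j + nu j).
  rewrite phiD; move: rep; rewrite /is_rep phiE => ->; rewrite -phi_ev -phiD.
  apply: phi_ext => j; rewrite /yv /pre /ev; case: ifP => [/andP[_ jk]|_].
    have -> : (j == k) = false by apply/negP => /eqP E; rewrite E ltnn in jk.
    by rewrite addn0.
  by case: eqP.
case: (boolP [exists i : 'I_n.+1, [&& 0 < i, i < k & 0 < nu i]]).
  case/existsP => i /and3P[i0 ik nui].
  apply: (IH i ik); first by rewrite -lt0n.
  apply: (ap_sub _ (_ : ap (phi (fun j => pre k j + nu j)))); last by rewrite -E.
  move=> j; rewrite /yv /pre.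
  case: (boolP ((0 < j) && (j < i))) => [/andP[j0 ji]|_].
    by rewrite j0 (ltn_trans ji ik) leq_addr.
  case: eqP => [->|_] //; rewrite i0 ik /=; lia.
rewrite negb_exists => /forallP H.
have supp : forall i : 'I_n.+1, 0 < nu i -> k < i.
  move=> i nui; have := H i; rewrite nui andbT.
  case: (posnP i) => [i0|ipos].
    have ie : i = ord0 by apply: val_inj.
    by rewrite ie nu0 in nui.
  rewrite /= -leqNgt leq_eqVlt => /orP[/eqP ki|//].
  have eki : k = i by apply: val_inj.
  by rewrite -eki nuk in nui.
have : size_rep nu * (g k).+1 <= phi nu.
  rewrite /size_rep big_distrl /=; apply: leq_sum => i _.
  case: (posnP (nu i)) => [->|p]; first by rewrite !mul0n.
  by rewrite leq_mul2l; apply/orP; right; case: Hg => Hi _; apply: Hi; apply: supp.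
move: rep; rewrite /is_rep phiE => ->; nia.
Qed.

Lemma top_nap (k : 'I_n.+1) : k != ord0 -> ~ ap (phi (yv k)).
Proof.
move: k; have : forall K (k : 'I_n.+1), k < K -> k != ord0 -> ~ ap (phi (yv k)).
  elim => // K IHK k kK; apply: top_nap_aux => k' k'k; apply: IHK.
  exact: leq_trans k'k _.
by move=> H k; apply: (H n.+1).
Qed.

Definition top := fun j : 'I_n.+1 => if j == ord0 then 0 else gam j.

Lemma box_top : box top.
Proof. by rewrite /box /top eqxx; split => // i /negPf ->. Qed.

Lemma box_le_top f : box f -> forall j, f j <= top j.
Proof. by move=> [f0 fb] j; rewrite /top; case: eqP => [->|/eqP]; [rewrite f0|apply: fb]. Qed.

Lemma inj_step f h (i : 'I_n.+1) : box f -> box h -> phi f = phi h ->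
  (forall j : 'I_n.+1, j < i -> f j = h j) -> f i < h i -> False.
Proof.
move=> bf bh E lt fi.
have i0 : i != ord0 by apply/eqP => i0; move: fi; rewrite i0 bf.1 bh.1.
set u := fun j => top j - f j + h j.
have Eu : phi u = phi top.
  rewrite /u phiD -E -phiD; apply: phi_ext => j; rewrite subnK //; exact: box_le_top.
apply: (top_nap i0); apply: (ap_sub _ (_ : ap (phi u))); last by rewrite Eu; apply: box_ap; exact: box_top.
move=> j; rewrite /yv /u /top.
case: (boolP ((0 < j) && (j < i))) => [/andP[j0 ji]|_].
  have -> : (j == ord0) = false by apply/negP => /eqP je; rewrite je in j0.
  by rewrite (lt j ji) subnK //; apply: bh.2; apply/eqP => je; rewrite je in j0.
case: eqP => [->|_] //; rewrite (negPf i0).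
have := bf.2 i i0; lia.
Qed.

Lemma box_inj f h : box f -> box h -> phi f = phi h -> forall i, f i = h i.
Proof.
move=> bf bh E.
have : forall K (i : 'I_n.+1), i < K -> f i = h i.
  elim => // K IH i iK.
  have lt : forall j : 'I_n.+1, j < i -> f j = h j.
    by move=> j ji; apply: IH; apply: leq_trans ji _.
  case: (ltngtP (f i) (h i)) => // c.
    by exfalso; apply: (inj_step bf bh E lt c).
  by exfalso; apply: (inj_step bh bf (esym E) (fun j jl => esym (lt j jl)) c).
by move=> H i; apply: (H n.+1).
Qed.

Lemma dvdn_modm d a b : d %| b -> (d %| a %% b) = (d %| a).
Proof. by move=> db; rewrite {2}(divn_eq a b) dvdn_addr // dvdn_mull. Qed.

Definition upd (f : {ffun 'I_n.+1 -> nat}) (i : 'I_n.+1) t :=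
  [ffun j => if j == i then t else f j].

Fixpoint vecs (C : seq 'I_n.+1) : seq {ffun 'I_n.+1 -> nat} :=
  if C is i :: C' then [seq upd f i t | f : {ffun 'I_n.+1 -> nat} <- vecs C', t <- iota 0 (gam i).+1]
  else [:: [ffun => 0]].

Lemma vecs_cons i C : vecs (i :: C) =
  [seq upd f i t | f : {ffun 'I_n.+1 -> nat} <- vecs C, t <- iota 0 (gam i).+1].
Proof. by []. Qed.

Lemma vecs1 C (f : {ffun 'I_n.+1 -> nat}) : f \in vecs C ->
  (forall j, j \notin C -> f j = 0) /\ (forall j, f j <= gam j).
Proof.
elim: C f => [|i C IH] f.
  by rewrite /= inE => /eqP ->; split => j; rewrite ffunE.
case/allpairsP => [[f' t] [f'in tin ->]] /=; have [H1 H2] := IH _ f'in.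
split => j; rewrite ffunE; case: eqP => [->|ne].
- by rewrite inE eqxx.
- by rewrite inE negb_or => /andP[_ jC]; apply: H1.
- by move: tin; rewrite mem_iota add0n ltnS.
- exact: H2.
Qed.

Lemma vecs2 C (f : {ffun 'I_n.+1 -> nat}) :
  (forall j, j \notin C -> f j = 0) -> (forall j, f j <= gam j) -> f \in vecs C.
Proof.
elim: C f => [|i C IH] f H1 H2.
  by rewrite /= inE; apply/eqP/ffunP => j; rewrite ffunE H1.
apply/allpairsP; exists (upd f i 0, f i); split => /=.
- apply: IH.
    move=> j; rewrite ffunE; case: (eqVneq j i) => [->//|ne] jC.
    by apply: H1; rewrite inE negb_or ne.
  by move=> j; rewrite ffunE; case: eqP.
- by rewrite -[0 :: _]/(iota 0 (gam i).+1) mem_iota add0n ltnS H2.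
- by apply/ffunP => j; rewrite !ffunE; case: eqP => [->|].
Qed.

Lemma vecs_uniq C : uniq C -> uniq (vecs C).
Proof.
elim: C => [|i C IH] // /andP[iC uC]; apply: allpairs_uniq => //.
- exact: IH.
- exact: iota_uniq.
move=> [f t] [f' t'] /allpairsPdep[a [b [ain bin [-> ->]]]].
move=> /allpairsPdep[a' [b' [ain' bin' [-> ->]]]] /= E.
have Ei : b = b' by have := congr1 (fun F : {ffun _ -> _} => F i) E; rewrite !ffunE eqxx.
congr (_, _) => //; apply/ffunP => j.
have := congr1 (fun F : {ffun _ -> _} => F j) E; rewrite !ffunE.
case: eqP => [->|] // _; by rewrite (vecs1 ain).1 // (vecs1 ain').1.
Qed.

Lemma size_vecs C : size (vecs C) = \prod_(i <- C) (gam i).+1.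
Proof.
elim: C => [|i C IH]; first by rewrite big_nil.
change (size [seq upd f i t | f : {ffun 'I_n.+1 -> nat} <- vecs C, t <- iota 0 (gam i).+1] = \prod_(j <- i :: C) (gam j).+1).
by rewrite size_allpairs size_iota IH big_cons mulnC.
Qed.

Lemma phi_upd (f : {ffun 'I_n.+1 -> nat}) i t : f i = 0 -> phi (upd f i t) = phi f + t * g i.
Proof.
move=> fi; rewrite -phi_ev -phiD; apply: phi_ext => j; rewrite ffunE /ev.
by case: eqP => [->|]; rewrite ?fi ?addn0.
Qed.

Definition N := [seq i <- enum 'I_n.+1 | i != ord0].

Lemma N_uniq : uniq N.
Proof. by apply: filter_uniq; apply: enum_uniq. Qed.

Lemma memN i : (i \in N) = (i != ord0).
Proof. by rewrite mem_filter mem_enum andbT. Qed.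

Lemma vec_box C (f : {ffun 'I_n.+1 -> nat}) : {subset C <= N} -> f \in vecs C -> box f.
Proof.
move=> sC fin; have [H1 H2] := vecs1 fin; split => [|i _]; last exact: H2.
by apply: H1; apply/negP => /sC; rewrite memN eqxx.
Qed.

Lemma res_inj C : {subset C <= N} -> {in vecs C &, injective (fun f : {ffun 'I_n.+1 -> nat} => phi f %% m)}.
Proof.
move=> sC f h fin hin E; have bf := vec_box sC fin; have bh := vec_box sC hin.
have E' := ap_uniq (box_ap bf) (box_ap bh) E.
by apply/ffunP => i; apply: box_inj.
Qed.

Lemma perm_res : perm_eq [seq phi f %% m | f : {ffun 'I_n.+1 -> nat} <- vecs N] (iota 0 m).
Proof.
apply: uniq_perm.
- by rewrite map_inj_in_uniq; [apply: vecs_uniq; apply: N_uniq|apply: res_inj].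
- exact: iota_uniq.
move=> x; rewrite mem_iota add0n /=; apply/mapP/idP => [[f _ ->]|xm].
  exact: ltn_pmod m_pos.
have [y [apy yx]] := ap_exists xm.
have [lam [l0 [lb rep]]] := (Hrect y).1 apy.
exists [ffun j => lam j]; last by rewrite -yx; congr (_ %% _); rewrite -rep /phi; apply: eq_bigr => j _; rewrite ffunE.
apply: vecs2 => j; rewrite ffunE.
  by rewrite memN negbK => /eqP ->.
case: (eqVneq j ord0) => [->|ne]; [by rewrite l0|exact: lb].
Qed.

Lemma m_prod : m = \prod_(i <- N) (gam i).+1.
Proof. by have := perm_size perm_res; rewrite size_map size_iota size_vecs. Qed.

Definition F (z : algC) (i : 'I_n.+1) := (\sum_(t <- iota 0 (gam i).+1) z ^+ (t * g i))%R.

Lemma sum_vecs (z : algC) C : uniq C ->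
  (\sum_(f <- vecs C) z ^+ phi f = \prod_(i <- C) F z i)%R.
Proof.
elim: C => [|i C IH].
  by move=> _; rewrite /= big_seq1 big_nil /phi big1 // => j _; rewrite ffunE.
move=> /andP[iC uC]; rewrite vecs_cons big_allpairs_dep /= big_cons -IH // mulrC big_distrl /=.
apply: eq_big_seq => f fin; rewrite /F big_distrr /=; apply: eq_bigr => t _.
by rewrite phi_upd ?exprD //; apply: (vecs1 fin).1.
Qed.

Lemma sum_zero (z : algC) : (z ^+ m = 1 -> z != 1 -> \sum_(f <- vecs N) z ^+ phi f = 0)%R.
Proof.
move=> zm z1.
rewrite (eq_bigr (fun f : {ffun 'I_n.+1 -> nat} => (z ^+ (phi f %% m))%R)); last by move=> f _; rewrite expr_mod.
rewrite -(big_map (fun f : {ffun 'I_n.+1 -> nat} => phi f %% m) xpredT (fun x => (z ^+ x)%R)) (perm_big _ perm_res).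
have -> : iota 0 m = index_iota 0 m by rewrite /index_iota subn0.
have := subrX1 z m; rewrite zm subrr big_mkord => /esym/eqP.
by rewrite mulf_eq0 subr_eq0 (negPf z1) /= => /eqP.
Qed.

Lemma sizeN : size N = n.
Proof.
transitivity #|predC1 (ord0 : 'I_n.+1)|; last by rewrite cardC1 card_ord.
rewrite cardE /N; congr size.
by rewrite /enum_mem -filter_predI; apply: eq_in_filter => i _; rewrite /= !inE andbT.
Qed.

Definition Rem (C : seq 'I_n.+1) := [seq i <- N | i \notin C].
Definition PP (C : seq 'I_n.+1) := \prod_(i <- Rem C) (gam i).+1.

Lemma perm_N C : uniq C -> {subset C <= N} -> perm_eq N (C ++ Rem C).
Proof.
move=> uC sC; rewrite perm_sym.
apply: perm_trans (_ : perm_eq ([seq i <- N | i \in C] ++ Rem C) N).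
  rewrite perm_cat2r; apply: uniq_perm => //; first by apply: filter_uniq; apply: N_uniq.
  by move=> x; rewrite mem_filter; case xC: (x \in C) => //=; rewrite sC.
by rewrite perm_filterC.
Qed.

Lemma gam_pos j : j != ord0 -> 0 < gam j.
Proof.
move=> j0; case: Hg => inc [gen ind].
have Sg : S (g j) by rewrite -[g j]mul1n -phi_ev; apply: phiS.
have apg : ap (g j).
  split => // [[mj Sgm]].
  have [kap rk] := (gen _).1 Sgm; rewrite /is_rep phiE in rk.
  have kj : kap j = 0.
    apply/eqP; apply: contraT; rewrite -lt0n => kpos.
    have : kap j * g j <= phi kap by rewrite /phi (bigD1 j) //= leq_addr.
    have : g j <= kap j * g j by rewrite leq_pmull.
    have := m_pos; rewrite rk; lia.
  apply: (ind j); exists (fun i => kap i + ev ord0 1 i); split.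
    by rewrite /ev (negPf j0) addn0.
  by rewrite /is_rep phiE phiD phi_ev mul1n rk subnK.
have [lam [l0 [lb rep]]] := (Hrect (g j)).1 apg.
rewrite lt0n; apply/negP => /eqP g0.
have := lb j j0; rewrite g0 leqn0 => /eqP lj.
by apply: (ind j); exists lam.
Qed.

Lemma step C : uniq C -> {subset C <= N} -> (forall i, i \in C -> PP C %| g i) -> Rem C != [::] ->
  exists j, [/\ j \in Rem C, (\prod_(i <- Rem C | i != j) (gam i).+1) %| g j &
   exists mu : 'I_n.+1 -> nat, (gam j).+1 * g j = phi mu /\
     (forall l, mu l != 0 -> (l == ord0) || (l \in C))].
Proof.
move=> uC sC Hdiv Rne.
have pN := perm_N uC sC.
have uR : uniq (Rem C) by apply: filter_uniq; apply: N_uniq.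
have mE : m = (\prod_(i <- C) (gam i).+1) * PP C by rewrite {1}m_prod (perm_big _ pN) big_cat.
have Ppos : 0 < PP C by apply: prodn_gt0.
have P1 : 1 < PP C.
  move: Rne; rewrite /PP; case E: (Rem C) => [//|i R'] _; rewrite big_cons.
  have iN : i \in Rem C by rewrite E mem_head.
  move: iN; rewrite mem_filter memN => /andP[_ i0].
  have := gam_pos i0; have : 0 < \prod_(k <- R') (gam k).+1 by apply: prodn_gt0.
  nia.
have [z zP] := C_prim_root_exists Ppos.
have Pm : PP C %| m by rewrite mE dvdn_mull.
have zm : (z ^+ m = 1)%R by apply/eqP; rewrite -(prim_order_dvd zP).
have z1 : (z != 1)%R.
  apply/negP => /eqP z1; have := prim_order_dvd zP 1; rewrite expr1 z1 eqxx dvdn1 => /eqP P1'.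
  by rewrite P1' in P1.
have S0 := sum_zero zm z1.
rewrite (sum_vecs z N_uniq) (perm_big _ pN) big_cat /= in S0.
have FC : (\prod_(i <- C) F z i != 0)%R.
  rewrite prodf_seq_neq0; apply/allP => i iC /=.
  rewrite /F (eq_bigr (fun _ => 1%R)); last first.
    move=> t _; apply/eqP; rewrite -(prim_order_dvd zP); apply: dvdn_mull; exact: Hdiv.
  by rewrite -[iota 0 _]/(index_iota 0 (gam i).+1) sumr_const_nat subn0 pnatr_eq0.
have FR : (\prod_(i <- Rem C) F z i == 0)%R.
  by move/eqP: S0; rewrite mulf_eq0 (negPf FC).
move: FR; rewrite prodf_seq_eq0 => /hasP[j jR /= Fj0].
have zj : (z ^+ ((gam j).+1 * g j) = 1)%R.
  set y := (z ^+ g j)%R.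
  have Fy : F z j = (\sum_(t < (gam j).+1) y ^+ t)%R.
    rewrite /F -[iota 0 _]/(index_iota 0 (gam j).+1) big_mkord; apply: eq_bigr => t _.
    by rewrite mulnC exprM.
  move/eqP: Fj0; rewrite Fy => Fj0.
  have := subrX1 y (gam j).+1; rewrite Fj0 mulr0 => /eqP; rewrite subr_eq0 => /eqP.
  by rewrite /y -exprM mulnC.
have dv : PP C %| (gam j).+1 * g j by rewrite (prim_order_dvd zP) zj.
have PE : PP C = (gam j).+1 * \prod_(i <- Rem C | i != j) (gam i).+1.
  by rewrite /PP (bigD1_seq j).
exists j; split => //.
  by move: dv; rewrite PE dvdn_pmul2l.
set r := ((gam j).+1 * g j) %% m.
set s1 := [seq phi f %% m | f : {ffun 'I_n.+1 -> nat} <- vecs C].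
set s2 := [seq PP C * i | i <- iota 0 (m %/ PP C)].
have us1 : uniq s1 by rewrite map_inj_in_uniq; [apply: vecs_uniq|apply: res_inj].
have ss12 : {subset s1 <= s2}.
  move=> x /mapP[f fin ->].
  have Pf : PP C %| phi f.
    apply: dvdn_sum => i _; case: (posnP (f i)) => [->|fpos]; first by rewrite mul0n dvdn0.
    apply: dvdn_mull; apply: Hdiv; apply: contraT => iC.
    by move: fpos; rewrite ((vecs1 fin).1 i iC).
  have Pr : PP C %| phi f %% m by rewrite dvdn_modm.
  apply/mapP; exists (phi f %% m %/ PP C); last by rewrite mulnC divnK.
  by rewrite mem_iota add0n /= ltn_divRL // divnK // ltn_pmod // m_pos.
have sz : size s2 <= size s1 by rewrite !size_map size_iota size_vecs {1}mE mulnK.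
have [_ eq12] := uniq_min_size us1 ss12 sz.
have rs2 : r \in s2.
  have Pr : PP C %| r by rewrite /r dvdn_modm.
  apply/mapP; exists (r %/ PP C); last by rewrite mulnC divnK.
  by rewrite mem_iota add0n /= ltn_divRL // divnK // ltn_pmod // m_pos.
have /mapP[f fin fr] : r \in s1 by rewrite eq12.
have apf : ap (phi f) := box_ap (vec_box sC fin).
have Ss : S ((gam j).+1 * g j) by rewrite -phi_ev; apply: phiS.
have [le dvm] := ap_min apf Ss fr.
exists (fun l => f l + ev ord0 (((gam j).+1 * g j - phi f) %/ m) l); split.
  by rewrite phiD phi_ev divnK // subnKC.
move=> l; rewrite /ev; case: (eqVneq l ord0) => [->|l0] //=; rewrite addn0 => fl.
apply: contraT => lC.
by rewrite ((vecs1 fin).1 l lC) in fl.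
Qed.

Definition Rel (C : seq 'I_n.+1) := forall p, p < size C -> exists mu : 'I_n.+1 -> nat,
  (gam (nth ord0 C p)).+1 * g (nth ord0 C p) = phi mu /\
  (forall l, mu l != 0 -> (l == ord0) || (l \in take p C)).

Lemma build k : k <= n -> exists C : seq 'I_n.+1,
  [/\ uniq C, {subset C <= N}, size C = k, (forall i, i \in C -> PP C %| g i) & Rel C].
Proof.
elim: k => [|k IH] kn.
  by exists [::]; split => //; move=> p.
have [C [uC sC szC Hd HR]] := IH (ltnW kn).
have Rne : Rem C != [::].
  apply/negP => /eqP R0.
  have sNC : {subset N <= C}.
    move=> i iN; apply: contraT => iC.
    have : i \in Rem C by rewrite mem_filter iC iN.
    by rewrite R0.
  have := uniq_leq_size N_uniq sNC; rewrite szC sizeN; lia.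
have [j [jR dj [mu [Emu Hmu]]]] := step uC sC Hd Rne.
have jC : j \notin C by move: jR; rewrite mem_filter => /andP[].
have jN : j \in N by move: jR; rewrite mem_filter => /andP[].
have PPr : PP (rcons C j) = \prod_(i <- Rem C | i != j) (gam i).+1.
  rewrite /PP /Rem big_filter big_filter_cond; apply: eq_bigl => i.
  by rewrite mem_rcons inE negb_or andbC.
have PE : PP C = (gam j).+1 * PP (rcons C j).
  by rewrite PPr /PP (bigD1_seq j) //; apply: filter_uniq; apply: N_uniq.
exists (rcons C j); split.
- by rewrite rcons_uniq jC uC.
- by move=> i; rewrite mem_rcons inE => /orP[/eqP ->|/sC].
- by rewrite size_rcons szC.
- move=> i; rewrite mem_rcons inE => /orP[/eqP ->|iC]; first by rewrite PPr.
  by apply: dvdn_trans (Hd i iC); rewrite PE dvdn_mull.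
move=> p; rewrite size_rcons ltnS leq_eqVlt => /orP[/eqP ->|pk].
  exists mu; rewrite nth_rcons ltnn eqxx -cats1 take_size_cat //; split => //.
have [mu' [E' H']] := HR p pk.
by exists mu'; rewrite nth_rcons pk -cats1 takel_cat ?(ltnW pk).
Qed.

Lemma main_sec : exists lam : 'I_n.+1 -> 'I_n.+1 -> nat,
    (forall i : 'I_n.+1, i != ord0 -> (gam i + 1) * g i = \sum_(j < n.+1) lam i j * g j) /\
    exists sigma : 'S_n.+1, sigma ord0 = ord0 /\
      (forall i j : 'I_n.+1, i != ord0 -> i <= j -> lam (sigma i) (sigma j) = 0).
Proof.
have [C [uC sC szC _ HR]] := build (leqnn n).
have NC : forall i, i != ord0 -> i \in C.
  move=> i i0; have le : size N <= size C by rewrite sizeN szC.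
  have [_ eq] := uniq_min_size uC sC le.
  by rewrite eq memN.
have QE : forall i : 'I_n.+1, exists mu : 'I_n.+1 -> nat, i != ord0 ->
   (gam i).+1 * g i = phi mu /\ (forall l, mu l != 0 -> (l == ord0) || (l \in take (index i C) C)).
  move=> i; case: (eqVneq i ord0) => [->|i0]; first by exists (fun _ => 0).
  have iC := NC i i0; have ic : index i C < size C by rewrite index_mem.
  have [mu [E H]] := HR (index i C) ic.
  by exists mu => _; rewrite nth_index in E.
have [lam Hlam] := fin_all_exists QE.
exists lam; split.
  by move=> i i0; have [E _] := Hlam i i0; rewrite addn1 E.
have pos : forall i : 'I_n.+1, i != ord0 -> 0 < i by move=> i; rewrite lt0n.
have predn : forall i : 'I_n.+1, i != ord0 -> i.-1 < n.
  by move=> i i0; have := ltn_ord i; have := pos i i0; lia.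
have nthC : forall p, p < n -> nth ord0 C p \in C by move=> p pn; rewrite mem_nth ?szC.
have nth0 : forall p, p < n -> nth ord0 C p != ord0.
  by move=> p pn; rewrite -memN; apply: sC; apply: nthC.
pose f := fun i : 'I_n.+1 => if i == ord0 then ord0 else nth ord0 C i.-1.
have finj : injective f.
  move=> i i'; rewrite /f; case: (eqVneq i ord0) => [->|i0]; case: (eqVneq i' ord0) => [->|i'0] //.
  - by move=> E; have := nth0 _ (predn _ i'0); rewrite -E eqxx.
  - by move=> E; have := nth0 _ (predn _ i0); rewrite E eqxx.
  - move/eqP; rewrite nth_uniq ?szC ?predn // => /eqP E; apply: val_inj => /=.
    have := pos _ i0; have := pos _ i'0; lia.
exists (perm finj); split; first by rewrite permE /f eqxx.
move=> i j i0 ij; rewrite !permE /f (negPf i0).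
have j0 : j != ord0 by rewrite -(inj_eq val_inj) /= -lt0n (leq_trans (pos _ i0) ij).
rewrite (negPf j0).
set a := nth ord0 C i.-1; set b := nth ord0 C j.-1.
have a0 : a != ord0 := nth0 _ (predn _ i0).
have [_ H] := Hlam a a0.
apply/eqP; apply: contraT => nz; have := H b nz.
rewrite (negPf (nth0 _ (predn _ j0))) /=.
have ia : index a C = i.-1 by rewrite index_uniq ?szC ?predn.
have ib : index b C = j.-1 by rewrite index_uniq ?szC ?predn.
rewrite ia in_take ?nthC ?predn // ib => lt.
by have := pos _ i0; lia.
Qed.

End Main.

Theorem mainTheorem3 (n : nat) (S : pred nat) (g : 'I_n.+1 -> nat)
    (gam : 'I_n.+1 -> nat) :
  numerical_semigroup S ->
  minimal_generators S g ->
  (forall i : 'I_n.+1, i != ord0 -> is_gamma S (g ord0) g i (gam i)) ->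
  gamma_rectangular S g gam ->
  exists lam : 'I_n.+1 -> 'I_n.+1 -> nat,
    (forall i : 'I_n.+1, i != ord0 ->
       (gam i + 1) * g i = \sum_(j < n.+1) lam i j * g j) /\
    exists sigma : 'S_n.+1,
      sigma ord0 = ord0 /\
      (forall i j : 'I_n.+1, i != ord0 -> i <= j -> lam (sigma i) (sigma j) = 0).
Proof.
move=> HS Hg Hgam Hrect; exact: (main_sec HS Hg Hgam Hrect).
Qed.
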